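(* Let $d$ be a premetric with open balls on a topological space $X$. (1) If $\overline d=\overline d^\circ$, then the premetric $\overline d=\overline d^\circ$ is right-continuous. (2) If $d$ is $\overline{\mathsf{dist}}$-continuous, then $\overline d=\overline d^\circ$ and this premetric is right-continuous and $\overline{\mathsf{dist}}$-continuous.
   Context: A premetric on $X$ is $d:X\times X\to[0,\infty)$ with $d(x,x)=0$. $B_d(x,\varepsilon)=\{y:d(x,y)<\varepsilon\}$, $B_d(A,\varepsilon)=\bigcup_{a\in A}B_d(a,\varepsilon)$; $d$ has open balls if every $B_d(x,\varepsilon)$ is open; right-continuous if $y\mapsto d(x,y)$ is continuous for each $x$. For non-empty $A$: $\overline d_A(x)=\inf\{\varepsilon>0:x\in\overline{B_d(A,\varepsilon)}\}$, $\overline d^\circ_A(x)=\inf\{\varepsilon>0:x\in B_d(A,\varepsilon)\cup\mathrm{int}\,\overline{B_d(A,\varepsilon)}\}$; a premetric is $\overline{\mathsf{dist}}$-continuous if $\overline d_A$ is continuous for every non-empty $A$. $\overline d(x,y)=\overline d_{\{x\}}(y)$, $\overline d^\circ(x,y)=\overline d^\circ_{\{x\}}(y)$. *)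

(* Defs.v *)
From HB Require Import structures.
From mathcomp Require Import all_boot all_order all_algebra.
From mathcomp Require Import all_classical all_reals topology normedtype.
Set Implicit Arguments. Unset Strict Implicit. Unset Printing Implicit Defensive.
Import Order.TTheory GRing.Theory Num.Theory.
Import numFieldNormedType.Exports.
Local Open Scope classical_set_scope.
Local Open Scope ring_scope.

Section Premetric.
Variables (R : realType) (X : topologicalType).

Definition is_premetric (d : X -> X -> R) :=
  (forall x y, 0 <= d x y) /\ (forall x, d x x = 0).

Definition pball (d : X -> X -> R) (x : X) (e : R) : set X :=
  [set y | d x y < e].

Definition pballA (d : X -> X -> R) (A : set X) (e : R) : set X :=
  \bigcup_(a in A) pball d a e.

Definition has_open_balls (d : X -> X -> R) :=
  forall x e, 0 < e -> open (pball d x e).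

Definition right_continuous (d : X -> X -> R) :=
  forall x, continuous (d x).

Definition dbarA (d : X -> X -> R) (A : set X) (x : X) : R :=
  inf [set e : R | 0 < e /\ closure (pballA d A e) x].

Definition dbarcA (d : X -> X -> R) (A : set X) (x : X) : R :=
  inf [set e : R | 0 < e /\
        (pballA d A e `|` interior (closure (pballA d A e))) x].

Definition dist_continuous (d : X -> X -> R) :=
  forall A : set X, A !=set0 -> continuous (dbarA d A).

Definition dbar (d : X -> X -> R) (x y : X) : R := dbarA d [set x] y.
Definition dbarc (d : X -> X -> R) (x y : X) : R := dbarcA d [set x] y.

End Premetric.

(* Main.v *)
Require Import Defs.
From HB Require Import structures.
From mathcomp Require Import all_boot all_order all_algebra.
From mathcomp Require Import all_classical all_reals topology normedtype.
From mathcomp Require Import lra unstable.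
Import Order.TTheory GRing.Theory Num.Theory.
Import numFieldNormedType.Exports.
Local Open Scope classical_set_scope.
Local Open Scope ring_scope.

Section Helpers.
Variables (R : realType) (X : topologicalType) (d : X -> X -> R).
Hypothesis hd : is_premetric d.

Lemma lb0 (P : R -> Prop) : has_lbound [set e : R | 0 < e /\ P e].
Proof. by exists 0 => e [/ltW]. Qed.

Lemma inf_ge0 (P : R -> Prop) : [set e : R | 0 < e /\ P e] !=set0 ->
  0 <= inf [set e : R | 0 < e /\ P e].
Proof. by move=> ne; apply: lb_le_inf => // e [/ltW]. Qed.

Lemma pballA_mono A a b : a <= b -> pballA d A a `<=` pballA d A b.
Proof.
move=> ab z [x Ax h]; exists x => //; rewrite /pball /=.
exact: lt_le_trans h ab.
Qed.

Lemma Sne A y : A !=set0 ->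
  [set e : R | 0 < e /\ closure (pballA d A e) y] !=set0.
Proof.
case=> a Aa; exists (d a y + 1); split.
  by have := (proj1 hd) a y; lra.
by apply: subset_closure; exists a => //; rewrite /pball /=; lra.
Qed.

Lemma Scne A y : A !=set0 ->
  [set e : R | 0 < e /\
     (pballA d A e `|` interior (closure (pballA d A e))) y] !=set0.
Proof.
case=> a Aa; exists (d a y + 1); split.
  by have := (proj1 hd) a y; lra.
by left; exists a => //; rewrite /pball /=; lra.
Qed.

Lemma lsc A : A !=set0 -> forall y r, r < dbarA d A y ->
  nbhs y [set z | r < dbarA d A z].
Proof.
move=> A0 y r hr.
have fz0 : forall z, 0 <= dbarA d A z by move=> z; exact: inf_ge0 (Sne A z A0).
have [rlt0|rge0] := ltP r 0.
  apply: nearW => z /=; have := fz0 z; lra.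
set e := (r + dbarA d A y) / 2.
have e0 : 0 < e by rewrite /e; lra.
have ncl : ~ closure (pballA d A e) y.
  move=> cl; have : dbarA d A y <= e by apply: ge_inf; [exact: lb0|].
  rewrite /e; lra.
have : nbhs y (~` closure (pballA d A e)).
  apply: open_nbhs_nbhs; split; last exact: ncl.
  apply: closed_openC; exact: closed_closure.
apply: filterS => z nz /=; rewrite ltNge; apply/negP => fz.
have : dbarA d A z < e by rewrite /e; lra.
move=> /(inf_lt (Sne A z A0)) [e' [e'0 cl] e'e]; apply: nz.
exact: (closureS (pballA_mono A _ _ (ltW e'e))) cl.
Qed.

Lemma usc (hopen : has_open_balls d) A : A !=set0 -> forall y r,
  dbarcA d A y < r -> nbhs y [set z | dbarcA d A z < r].
Proof.
move=> A0 y r /(inf_lt (Scne A y A0)) [e [e0 [hB|hI]] er].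
  case: hB => a Aa hay.
  have : nbhs y (pball d a e) by apply: open_nbhs_nbhs; split => //; exact: hopen.
  apply: filterS => z hz /=.
  apply: le_lt_trans er; apply: ge_inf; first exact: lb0.
  by split => //; left; exists a.
have : nbhs y (interior (closure (pballA d A e))).
  by apply: open_nbhs_nbhs; split => //; exact: open_interior.
apply: filterS => z hz /=.
apply: le_lt_trans er; apply: ge_inf; first exact: lb0.
by split => //; right.
Qed.

Lemma cont_semi (f : X -> R) :
  (forall y r, f y < r -> nbhs y [set z | f z < r]) ->
  (forall y r, r < f y -> nbhs y [set z | r < f z]) -> continuous f.
Proof.
move=> u l y; apply/cvgrPdist_lt => eps e0.
have h1 := u y (f y + eps) ltac:(lra).
have h2 := l y (f y - eps) ltac:(lra).
apply: filterS2 h1 h2 => z /= a b.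
rewrite ltr_distlC; apply/andP; split; lra.
Qed.

Lemma cont_lt (f : X -> R) : continuous f -> forall y r, f y < r ->
  nbhs y [set z | f z < r].
Proof.
move=> hc y r hr.
have := hc y; move/cvgrPdist_lt => /(_ (r - f y) ltac:(lra)).
apply: filterS => z /=; rewrite ltr_distlC => /andP[_]; lra.
Qed.

Lemma eq_of_cont A : A !=set0 -> continuous (dbarA d A) ->
  dbarA d A = dbarcA d A.
Proof.
move=> A0 hc; apply/funext => y; apply/eqP; rewrite eq_le; apply/andP; split.
  apply: lb_le_inf; first exact: Scne.
  move=> e [e0 hBI]; apply: ge_inf; first exact: lb0.
  split => //; case: hBI => [hB|hI]; first exact: subset_closure.
  exact: interior_subset.
apply/ler_gtP => e he.
have fy0 : 0 <= dbarA d A y by exact: inf_ge0 (Sne A y A0).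
set e' := (dbarA d A y + e) / 2.
have U : nbhs y [set z | dbarA d A z < e'].
  by apply: cont_lt => //; rewrite /e'; lra.
apply: ge_inf; first exact: lb0.
split; first lra.
right; rewrite /interior /=.
apply: filterS U => z /= /(inf_lt (Sne A z A0)) [e'' [e''0 cl] e''e].
apply: (closureS (pballA_mono A e'' e _)) => //.
rewrite /e' in e''e; lra.
Qed.

Lemma closure_dbar A e :
  closure (pballA (dbar d) A e) = closure (pballA d A e).
Proof.
have c2 : pballA (dbar d) A e `<=` closure (pballA d A e).
  move=> y [a Aa hay]; rewrite /pball /dbar /= in hay.
  have [e' [e'0 cl] e'e] := inf_lt (Sne [set a] y (ex_intro _ a erefl)) hay.
  apply: (closureS _ cl) => z [b -> hb]; exists a => //.
  rewrite /pball /= in hb *; lra.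
have c1 : pballA d A e `<=` pballA (dbar d) A e.
  move=> y [a Aa hay]; exists a => //; rewrite /pball /dbar /= in hay *.
  have := (proj1 hd) a y => ha.
  apply: (@le_lt_trans _ _ ((d a y + e) / 2)); last lra.
  apply: ge_inf; first exact: lb0.
  split; first lra.
  by apply: subset_closure; exists a => //; rewrite /pball /=; lra.
apply/seteqP; split.
  have cc : closed (closure (pballA d A e)) by exact: closed_closure.
  by move: (closureS c2); rewrite -(proj1 (closure_id _) cc).
exact: closureS c1.
Qed.

End Helpers.
Arguments usc {R X d}. Arguments lsc {R X d}. Arguments eq_of_cont {R X d}.
Arguments closure_dbar {R X d}. Arguments cont_semi {R X}.

Theorem corollary1p6 (R : realType) (X : topologicalType) (d : X -> X -> R)
  (hd : is_premetric d) (hopen : has_open_balls d) :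
  ((dbar d = dbarc d) -> right_continuous (dbar d)) /\
  (dist_continuous d ->
     dbar d = dbarc d /\ right_continuous (dbar d) /\
     dist_continuous (dbar d)).
Proof.
have s1 : forall x : X, [set x] !=set0 by move=> x; exists x.
split.
  move=> h x; apply: cont_semi.
    move=> y r; rewrite h => hy; exact: (usc hd hopen _ (s1 x) _ _ hy).
  exact: (lsc hd _ (s1 x)).
move=> hdc; split.
  apply/funext => x; apply/funext => y; rewrite /dbar /dbarc.
  by rewrite (eq_of_cont hd _ (s1 x) (hdc _ (s1 x))).
split; first by move=> x; exact: hdc _ (s1 x).
move=> A A0.
have -> : dbarA (dbar d) A = dbarA d A.
  apply/funext => y; rewrite /dbarA; congr inf; apply/funext => e.
  change ((0 < e /\ closure (pballA (dbar d) A e) y) =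
    (0 < e /\ closure (pballA d A e) y)).
  by rewrite (closure_dbar hd).
exact: hdc.
Qed.
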